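(* Let $K$ be a field, let $I_1\subseteq S_1=K[x_1,\ldots,x_m]$ and $I_2\subseteq S_2=K[y_1,\ldots,y_n]$ be monomial ideals, let $S=S_1\otimes_K S_2=K[x_1,\ldots,x_m,y_1,\ldots,y_n]$, and let $I=(I_1,I_2)S$. Assume that $I_1$, $I_2$ and $I$ all satisfy the Ratliff condition. Regard $\mathrm{Soc}(I_1)$, $\mathrm{Soc}(I_2)$ and $\mathrm{Soc}(I)$ as ideals of $\mathrm{gr}_{I_1}(S_1)$, $\mathrm{gr}_{I_2}(S_2)$ and $\mathrm{gr}_I(S)$ respectively, and extend $\mathrm{Soc}(I_1)$, $\mathrm{Soc}(I_2)$ to ideals of $\mathrm{gr}_I(S)$ via the canonical injective maps $\mathrm{gr}_{I_i}(S_i)\to\mathrm{gr}_I(S)$. Then $\mathrm{Soc}(I)=\mathrm{Soc}(I_1)\,\mathrm{Soc}(I_2)$ (product of ideals in $\mathrm{gr}_I(S)$); equivalently, under the canonical isomorphism $\alpha:\mathrm{gr}_{I_1}(S_1)\otimes_K\mathrm{gr}_{I_2}(S_2)\to\mathrm{gr}_I(S)$, $f\otimes g\mapsto fg$, one has $\alpha(\mathrm{Soc}(I_1)\otimes_K\mathrm{Soc}(I_2))=\mathrm{Soc}(I)$.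
   Context: For an ideal $J$ in a ring $R$ (with maximal graded ideal $\mathfrak{n}$), $\mathrm{gr}_J(R)=\bigoplus_{k\ge0}J^k/J^{k+1}$ and $\mathrm{Soc}(J)=\bigoplus_{k\ge0}(J^k:\mathfrak{n})/J^k$. $J$ satisfies the Ratliff condition if $(J^{k+1}:J)=J^k$ for all $k\ge0$. Under this condition $(J^{k+1}:\mathfrak{n})\subseteq J^k$, so $(J^{k+1}:\mathfrak{n})/J^{k+1}\subseteq J^k/J^{k+1}$, and $\mathrm{Soc}(J)$ is identified with the ideal $(0:_{\mathrm{gr}_J(R)}\mathfrak{n})$ of $\mathrm{gr}_J(R)$, whose elements of degree $k$ are the classes $u+J^{k+1}\in J^k/J^{k+1}$ with $u\in (J^{k+1}:\mathfrak{n})$. Here $\mathfrak{n}$ is the maximal graded ideal of $S_1$, $S_2$ or $S$ respectively. The map $\alpha$ is an isomorphism. *)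

(* Defs.v *)
From HB Require Import structures.
From mathcomp Require Import all_boot all_order all_algebra.
From mathcomp Require Import mpoly.
Set Implicit Arguments. Unset Strict Implicit. Unset Printing Implicit Defensive.
Import GRing.Theory.
Local Open Scope ring_scope.

Section Ideals.
Variable R : comRingType.

Definition ideal_gen (G : R -> Prop) : R -> Prop :=
  fun p => exists s : seq (R * R),
    (forall x, x \in s -> G x.2) /\ p = \sum_(x <- s) x.1 * x.2.

Definition ideal_mul (I J : R -> Prop) : R -> Prop :=
  ideal_gen (fun p => exists a b, I a /\ J b /\ p = a * b).

Fixpoint ideal_pow (I : R -> Prop) (k : nat) : R -> Prop :=
  match k with
  | 0 => ideal_gen (fun p => p = 1)
  | k.+1 => ideal_mul (ideal_pow I k) I
  end.

Definition colon (I J : R -> Prop) : R -> Prop :=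
  fun u => forall v, J v -> I (u * v).

Definition ratliff (J : R -> Prop) : Prop :=
  forall (k : nat) (u : R), colon (ideal_pow J k.+1) J u <-> ideal_pow J k u.

(* Degree-k homogeneous part of Soc(J) in gr_J(R), nn the maximal graded
   ideal: the classes u + J^{k+1} in J^k/J^{k+1} with u in (J^{k+1} : nn).
   soc_lift J nn k u  means: u is a representative of such a class. *)
Definition soc_lift (J nn : R -> Prop) (k : nat) (u : R) : Prop :=
  ideal_pow J k u /\ colon (ideal_pow J k.+1) nn u.

End Ideals.

Section Graded.
Variables (R1 R : comRingType).

(* Extension to gr_J(R) of a homogeneous ideal A of gr_{J1}(R1) along the
   canonical map gr_{J1}(R1) -> gr_J(R) induced by f (class of a in
   J1^i/J1^{i+1} |-> class of f a in J^i/J^{i+1}).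
   A i a : a represents a degree-i element of A.
   ext_comp f A J d x : x in J^d represents a degree-d element of the
   extended ideal, i.e. x = sum_l r_l f(a_l) mod J^{d+1} with r_l in J^{d-i_l}
   (degree d-i_l elements of gr_J(R)) and A i_l a_l. *)
Definition ext_comp (f : R1 -> R) (A : nat -> R1 -> Prop) (J : R -> Prop)
    (d : nat) (x : R) : Prop :=
  ideal_pow J d x /\
  exists s : seq (nat * R * R1),
    (forall t, t \in s -> (t.1.1 <= d)%N /\ ideal_pow J (d - t.1.1) t.1.2
                          /\ A t.1.1 t.2) /\
    ideal_pow J d.+1 (x - \sum_(t <- s) t.1.2 * f t.2).

End Graded.

Section Product.
Variable R : comRingType.
(* Degree-k component of the product B*C of homogeneous ideals of gr_J(R):
   u in J^k with u = sum_l x_l y_l mod J^{k+1}, x_l of degree d_l in B and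
   y_l of degree k-d_l in C. *)
Definition prod_comp (B C : nat -> R -> Prop) (J : R -> Prop)
    (k : nat) (u : R) : Prop :=
  ideal_pow J k u /\
  exists s : seq (nat * R * R),
    (forall t, t \in s -> (t.1.1 <= k)%N /\ B t.1.1 t.1.2 /\ C (k - t.1.1)%N t.2) /\
    ideal_pow J k.+1 (u - \sum_(t <- s) t.1.2 * t.2).
End Product.

Section Poly.
Variable K : fieldType.

Definition maxgr (n : nat) : {mpoly K[n]} -> Prop :=
  ideal_gen (fun p => exists i : 'I_n, p = 'X_i).

Definition monomial_ideal (n : nat) (I : {mpoly K[n]} -> Prop) : Prop :=
  exists G : 'X_{1..n} -> Prop,
    forall p, I p <-> ideal_gen (fun q => exists mm, G mm /\ q = 'X_[mm]) p.

Definition incl1 (m n : nat) (p : {mpoly K[m]}) : {mpoly K[m + n]} :=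
  mmap (@mpolyC _ K) (fun i : 'I_m => 'X_(lshift n i)) p.
Definition incl2 (m n : nat) (p : {mpoly K[n]}) : {mpoly K[m + n]} :=
  mmap (@mpolyC _ K) (fun j : 'I_n => 'X_(rshift m j)) p.

Definition sum_ideal (m n : nat) (I1 : {mpoly K[m]} -> Prop)
    (I2 : {mpoly K[n]} -> Prop) : {mpoly K[m + n]} -> Prop :=
  ideal_gen (fun p => (exists a, I1 a /\ p = incl1 n a)
                      \/ (exists b, I2 b /\ p = incl2 m b)).
End Poly.

(* Main.v *)
Require Import Defs.
From HB Require Import structures.
From mathcomp Require Import all_boot all_order all_algebra.
From mathcomp Require Import mpoly.
From Stdlib Require Import Classical.
From mathcomp Require Import zify.
Set Implicit Arguments. Unset Strict Implicit. Unset Printing Implicit Defensive.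
Import GRing.Theory.
Local Open Scope ring_scope.

Section Gen.
Variable R : comRingType.
Implicit Types (G H : R -> Prop) (Q J : R -> Prop).

Definition is_ideal Q := Q 0 /\ (forall x y, Q x -> Q y -> Q (x + y)) /\
   (forall r x, Q x -> Q (r * x)).

Lemma gen_ideal G : is_ideal (ideal_gen G).
Proof.
split; first by exists [::]; split => //; rewrite big_nil.
split.
- move=> x y [s1 [H1 ->]] [s2 [H2 ->]]; exists (s1 ++ s2); split; last by rewrite big_cat.
  by move=> t; rewrite mem_cat => /orP [/H1|/H2].
- move=> r x [s [Hs ->]]; exists [seq (r * t.1, t.2) | t <- s]; split.
  + by move=> t /mapP [t' /Hs H ->].
  + by rewrite big_map mulr_sumr; apply: eq_bigr => t _; rewrite mulrA.
Qed.

Lemma gen_in G x : G x -> ideal_gen G x.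
Proof.
move=> Gx; exists [:: (1, x)]; split; last by rewrite big_seq1 mul1r.
by move=> t; rewrite inE => /eqP ->.
Qed.

Lemma ideal_sum Q (I : eqType) (s : seq I) (F : I -> R) : is_ideal Q ->
  (forall i, i \in s -> Q (F i)) -> Q (\sum_(i <- s) F i).
Proof.
move=> [H0 [HD HM]]; elim: s => [|a s IH] Hs; first by rewrite big_nil.
rewrite big_cons; apply: HD; first by apply: Hs; rewrite inE eqxx.
by apply: IH => i Hi; apply: Hs; rewrite inE Hi orbT.
Qed.

Lemma gen_min G Q : is_ideal Q -> (forall x, G x -> Q x) ->
  forall p, ideal_gen G p -> Q p.
Proof.
move=> HQ HG p [s [Hs ->]]; apply: ideal_sum => // t /Hs /HG.
by case: HQ => _ [_ HM]; apply: HM.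
Qed.

Lemma ideal_mulr Q r x : is_ideal Q -> Q x -> Q (x * r).
Proof. by move=> [_ [_ HM]] Hx; rewrite mulrC; apply: HM. Qed.

Lemma ideal_mull Q r x : is_ideal Q -> Q x -> Q (r * x).
Proof. by move=> [_ [_ HM]] Hx; apply: HM. Qed.

Lemma ideal_add Q x y : is_ideal Q -> Q x -> Q y -> Q (x + y).
Proof. by move=> [_ [HD _]]; apply: HD. Qed.

Lemma ideal0 Q : is_ideal Q -> Q 0.
Proof. by case. Qed.

Lemma ideal_sub Q x y : is_ideal Q -> Q x -> Q y -> Q (x - y).
Proof.
move=> HQ Hx Hy; apply: ideal_add => //.
by rewrite -mulN1r; apply: ideal_mull.
Qed.

Lemma ideal_colon Q x : is_ideal Q -> is_ideal (fun y => Q (x * y)).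
Proof.
move=> HQ; split; first by rewrite mulr0; apply: ideal0.
split; first by move=> a b Ha Hb; rewrite mulrDr; apply: ideal_add.
by move=> r a Ha; rewrite mulrCA; apply: ideal_mull.
Qed.

Lemma pow_ideal J k : is_ideal (ideal_pow J k).
Proof. by case: k => [|k] /=; apply: gen_ideal. Qed.

Lemma pow0 J x : ideal_pow J 0 x.
Proof.
rewrite -[x]mulr1; apply: ideal_mull; first exact: pow_ideal.
exact: gen_in.
Qed.

Lemma pow_mul J a b x y : ideal_pow J a x -> ideal_pow J b y ->
  ideal_pow J (a + b) (x * y).
Proof.
move=> Hx; elim: b y => [|b IH] y Hy.
  by rewrite addn0 mulrC; apply: ideal_mull => //; apply: pow_ideal.
rewrite addnS; move: y Hy; apply: gen_min.
  by apply: ideal_colon; apply: pow_ideal.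
move=> q [a0 [b0 [Ha0 [Hb0 ->]]]]; rewrite mulrA; apply: gen_in.
by exists (x * a0), b0; split => //; apply: IH.
Qed.

Lemma pow_S_sub J k x : ideal_pow J k.+1 x -> ideal_pow J k x.
Proof.
apply: gen_min; first exact: pow_ideal.
by move=> q [a0 [b0 [Ha0 [_ ->]]]]; apply: ideal_mulr => //; apply: pow_ideal.
Qed.

Lemma pow_anti J a b x : (a <= b)%N -> ideal_pow J b x -> ideal_pow J a x.
Proof.
move=> le; rewrite -(subnK le); elim: (b - a)%N => [|d IH] //= H.
by apply: IH; apply: pow_S_sub; rewrite -addSn.
Qed.

Lemma pow1 J x : J x -> ideal_pow J 1 x.
Proof.
move=> Jx; apply: gen_in; exists 1, x; split; first exact: pow0.
by rewrite mul1r.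
Qed.

Lemma colon_gen Q G x : is_ideal Q -> (forall g, G g -> Q (x * g)) ->
  colon Q (ideal_gen G) x.
Proof.
move=> HQ HG v Hv; move: v Hv; apply: gen_min => //.
exact: ideal_colon.
Qed.

End Gen.

Section Hom.
Variables (R1 R : comRingType) (f : {rmorphism R1 -> R}).

Lemma gen_hom G p : ideal_gen G p ->
  ideal_gen (fun q => exists a, G a /\ q = f a) (f p).
Proof.
move=> [s [Hs ->]]; exists [seq (f t.1, f t.2) | t <- s]; split.
  by move=> t /mapP [t' Ht' ->] /=; exists t'.2; split => //; apply: Hs.
by rewrite big_map rmorph_sum; apply: eq_bigr => t _; rewrite rmorphM.
Qed.

Lemma pow_hom (J1 : R1 -> Prop) (J : R -> Prop) i a :
  (forall x, J1 x -> J (f x)) -> ideal_pow J1 i a -> ideal_pow J i (f a).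
Proof.
move=> HJ; elim: i a => [|i IH] a Ha; first exact: pow0.
move: (gen_hom Ha); apply: gen_min; first exact: (pow_ideal J i.+1).
move=> q [x [[a0 [b0 [Ha0 [Hb0 ->]]]] ->]]; apply: gen_in.
by exists (f a0), (f b0); split; [apply: IH|split; [apply: HJ|rewrite rmorphM]].
Qed.
Lemma extS (J1 nn1 : R1 -> Prop) (J : R -> Prop) d x z1 :
  (forall a, J1 a -> J (f a)) -> nn1 z1 ->
  ext_comp f (soc_lift J1 nn1) J d x -> ideal_pow J d.+1 (x * f z1).
Proof.
move=> HJ Hz [_ [s [Hs Hd]]].
have -> : x * f z1 = (x - \sum_(t <- s) t.1.2 * f t.2) * f z1
                     + \sum_(t <- s) t.1.2 * f t.2 * f z1.
  by rewrite -mulr_suml -mulrDl subrK.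
apply: ideal_add; first exact: pow_ideal.
  by apply: ideal_mulr => //; apply: pow_ideal.
apply: ideal_sum; first exact: pow_ideal.
move=> t /Hs [Hle [Hr [_ Hcol]]].
rewrite -mulrA -rmorphM -(subnK Hle) -addnS.
apply: pow_mul => //; apply: pow_hom HJ _; exact: Hcol.
Qed.
End Hom.

Section Mono.
Variables (K : fieldType) (N : nat).
Local Notation P := {mpoly K[N]}.
Local Notation M := 'X_{1..N}.

Definition MI (Pm : M -> Prop) (p : P) := forall w, w \in msupp p -> Pm w.
Definition up (G : M -> Prop) (w : M) := exists2 g, G g & (g <= w)%MM.
Definition monos (G : M -> Prop) (q : P) := exists mm, G mm /\ q = 'X_[mm].

Lemma lepmD (a b c d : M) : (a <= b)%MM -> (c <= d)%MM -> (a + c <= b + d)%MM.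
Proof.
move=> /mnm_lepP H1 /mnm_lepP H2; apply/mnm_lepP => i.
by rewrite !mnmDE leq_add.
Qed.

Lemma lep0m (w : M) : (0 <= w)%MM.
Proof. by apply/mnm_lepP => i; rewrite mnm0E. Qed.

Lemma up_mon G (w w' : M) : up G w -> (w <= w')%MM -> up G w'.
Proof. by move=> [g Hg Hle] Hle'; exists g => //; apply: lepm_trans Hle'. Qed.

Lemma up_ideal G : is_ideal (MI (up G)).
Proof.
split; first by move=> w; rewrite msupp0.
split.
  move=> x y Hx Hy w Hw; have := msuppD_le Hw.
  by rewrite mem_cat => /orP [/Hx|/Hy].
move=> r x Hx w Hw; have /allpairsP [[m1 m2] /= [_ H2 ->]] := msuppM_le Hw.
by apply: up_mon (Hx _ H2) _; apply: lem_addl.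
Qed.

Lemma MI_X Pm w : MI Pm 'X_[w] <-> Pm w.
Proof.
split; first by move=> H; apply: H; rewrite msuppX inE.
by move=> H w'; rewrite msuppX inE => /eqP ->.
Qed.

Lemma MI_gen G p : ideal_gen (monos G) p <-> MI (up G) p.
Proof.
split.
  apply: gen_min; first exact: up_ideal.
  by move=> q [mm [Hmm ->]]; apply/MI_X; exists mm => //; apply: lepm_refl.
move=> H; rewrite (mpolyE p); apply: ideal_sum; first exact: gen_ideal.
move=> w /H [g Hg Hle].
have -> : p@_w *: 'X_[w] = (p@_w *: 'X_[w - g]) * 'X_[g].
  by rewrite -scalerAl -mpolyXD submK.
by apply: ideal_mull; first exact: gen_ideal; apply: gen_in; exists g.
Qed.

Definition Gsum (G H : M -> Prop) (w : M) :=
  exists g h, G g /\ H h /\ w = (g + h)%MM.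

Lemma MI_mul (A B : P -> Prop) G H :
  (forall p, A p <-> MI (up G) p) -> (forall p, B p <-> MI (up H) p) ->
  forall p, ideal_mul A B p <-> MI (up (Gsum G H)) p.
Proof.
move=> HA HB p; split.
  move: p; apply: gen_min; first exact: up_ideal.
  move=> q [a [b [/HA Ha [/HB Hb ->]]]] w Hw.
  have /allpairsP [[m1 m2] /= [H1 H2 ->]] := msuppM_le Hw.
  have [g Hg Hg'] := Ha _ H1; have [h Hh Hh'] := Hb _ H2.
  by exists (g + h)%MM; [exists g, h | apply: lepmD].
move=> /MI_gen; apply: gen_min; first exact: gen_ideal.
move=> q [mm [[g [h [Hg [Hh ->]]]] ->]]; apply: gen_in.
exists 'X_[g], 'X_[h]; split; first by apply/HA/MI_X; exists g => //; apply: lepm_refl.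
split; first by apply/HB/MI_X; exists h => //; apply: lepm_refl.
by rewrite mpolyXD.
Qed.

Fixpoint Gp (G : M -> Prop) (k : nat) : M -> Prop :=
  match k with
  | 0 => fun w => w = 0%MM
  | k.+1 => Gsum (Gp G k) G
  end.

Lemma MI_pow (J : P -> Prop) G : (forall p, J p <-> MI (up G) p) ->
  forall k p, ideal_pow J k p <-> MI (up (Gp G k)) p.
Proof.
move=> HJ; elim=> [|k IH] p.
  split=> _; first by move=> w _; exists 0%MM => //; apply: lep0m.
  exact: pow0.
exact: (MI_mul IH HJ).
Qed.

Lemma Gp_anti G a b (w : M) : (a <= b)%N -> up (Gp G b) w -> up (Gp G a) w.
Proof.
move=> le; rewrite -(subnK le); elim: (b - a)%N => [|d IH] //= H.
apply: IH; case: H => g [g1 [h [Hg1 [_ ->]]]] Hle.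
by exists g1 => //; apply: lepm_trans Hle; apply: lem_addr.
Qed.

End Mono.
Section Split.
Variables (K : fieldType) (m n : nat).

Definition lift1 (g : 'X_{1..m}) : 'X_{1..m+n} :=
  [multinom (match split i with inl j => g j | inr _ => 0%N end) | i < m + n].
Definition lift2 (g : 'X_{1..n}) : 'X_{1..m+n} :=
  [multinom (match split i with inl _ => 0%N | inr j => g j end) | i < m + n].
Definition pr1 (w : 'X_{1..m+n}) : 'X_{1..m} := [multinom w (lshift n i) | i < m].
Definition pr2 (w : 'X_{1..m+n}) : 'X_{1..n} := [multinom w (rshift m i) | i < n].

Lemma split_l (j : 'I_m) : split (lshift n j) = inl j.
Proof. exact: (unsplitK (inl _ j)). Qed.
Lemma split_r (j : 'I_n) : split (rshift m j) = inr j.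
Proof. exact: (unsplitK (inr _ j)). Qed.

Lemma lift1l g j : lift1 g (lshift n j) = g j.
Proof. by rewrite mnmE split_l. Qed.
Lemma lift1r g j : lift1 g (rshift m j) = 0%N.
Proof. by rewrite mnmE split_r. Qed.
Lemma lift2l g j : lift2 g (lshift n j) = 0%N.
Proof. by rewrite mnmE split_l. Qed.
Lemma lift2r g j : lift2 g (rshift m j) = g j.
Proof. by rewrite mnmE split_r. Qed.
Lemma pr1E w j : pr1 w j = w (lshift n j).
Proof. by rewrite mnmE. Qed.
Lemma pr2E w j : pr2 w j = w (rshift m j).
Proof. by rewrite mnmE. Qed.

Lemma decomp w : w = (lift1 (pr1 w) + lift2 (pr2 w))%MM.
Proof.
apply/mnmP => i; rewrite mnmDE; case: (split_ordP i) => j ->.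
  by rewrite lift1l lift2l pr1E addn0.
by rewrite lift1r lift2r pr2E.
Qed.

Lemma pr1_lift a b : pr1 (lift1 a + lift2 b)%MM = a.
Proof. by apply/mnmP => j; rewrite pr1E mnmDE lift1l lift2l addn0. Qed.
Lemma pr2_lift a b : pr2 (lift1 a + lift2 b)%MM = b.
Proof. by apply/mnmP => j; rewrite pr2E mnmDE lift1r lift2r. Qed.

Lemma pr1_le w w' : (w <= w')%MM -> (pr1 w <= pr1 w')%MM.
Proof. by move=> /mnm_lepP H; apply/mnm_lepP => j; rewrite !pr1E. Qed.
Lemma pr2_le w w' : (w <= w')%MM -> (pr2 w <= pr2 w')%MM.
Proof. by move=> /mnm_lepP H; apply/mnm_lepP => j; rewrite !pr2E. Qed.

Lemma lift_le a b a' b' : (a <= a')%MM -> (b <= b')%MM ->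
  (lift1 a + lift2 b <= lift1 a' + lift2 b')%MM.
Proof.
move=> /mnm_lepP H1 /mnm_lepP H2; apply/mnm_lepP => i; rewrite !mnmDE.
case: (split_ordP i) => j ->.
  by rewrite !lift1l !lift2l !addn0; apply: H1.
by rewrite !lift1r !lift2r !add0n; apply: H2.
Qed.

Lemma lift1D a a' : lift1 (a + a')%MM = (lift1 a + lift1 a')%MM.
Proof.
apply/mnmP => i; rewrite mnmDE; case: (split_ordP i) => j ->.
  by rewrite !lift1l mnmDE.
by rewrite !lift1r.
Qed.
Lemma lift2D a a' : lift2 (a + a')%MM = (lift2 a + lift2 a')%MM.
Proof.
apply/mnmP => i; rewrite mnmDE; case: (split_ordP i) => j ->.
  by rewrite !lift2l.
by rewrite !lift2r mnmDE.
Qed.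
Lemma lift10 : lift1 0%MM = 0%MM.
Proof.
apply/mnmP => i; rewrite mnm0E; case: (split_ordP i) => j ->.
  by rewrite lift1l mnm0E.
by rewrite lift1r.
Qed.
Lemma lift20 : lift2 0%MM = 0%MM.
Proof.
apply/mnmP => i; rewrite mnm0E; case: (split_ordP i) => j ->.
  by rewrite lift2l.
by rewrite lift2r mnm0E.
Qed.

Lemma pr1Ul v w : pr1 (U_(lshift n v) + w)%MM = (U_(v) + pr1 w)%MM.
Proof. by apply/mnmP => j; rewrite pr1E !mnmDE !mnm1E eq_lshift pr1E. Qed.
Lemma pr2Ul v w : pr2 (U_(lshift n v) + w)%MM = pr2 w.
Proof. by apply/mnmP => j; rewrite pr2E !mnmDE !mnm1E eq_lrshift pr2E. Qed.
Lemma pr1Ur v w : pr1 (U_(rshift m v) + w)%MM = pr1 w.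
Proof. by apply/mnmP => j; rewrite pr1E !mnmDE !mnm1E eq_rlshift pr1E. Qed.
Lemma pr2Ur v w : pr2 (U_(rshift m v) + w)%MM = (U_(v) + pr2 w)%MM.
Proof. by apply/mnmP => j; rewrite pr2E !mnmDE !mnm1E eq_rshift pr2E. Qed.

Definition G12 (G1 : 'X_{1..m} -> Prop) (G2 : 'X_{1..n} -> Prop) (w : 'X_{1..m+n}) :=
  (exists g1, G1 g1 /\ w = lift1 g1) \/ (exists g2, G2 g2 /\ w = lift2 g2).

Lemma Gp_split2 G1 G2 j g2 : Gp G2 j g2 -> Gp (G12 G1 G2) j (lift2 g2).
Proof.
elim: j g2 => [|j IH] g2 /=; first by move=> ->; rewrite lift20.
move=> [g' [h [Hg' [Hh ->]]]]; rewrite lift2D.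
by exists (lift2 g'), (lift2 h); split; [apply: IH|split => //; right; exists h].
Qed.

Lemma Gp_split G1 G2 k g : Gp (G12 G1 G2) k g <->
  exists i j g1 g2, (i + j)%N = k /\ Gp G1 i g1 /\ Gp G2 j g2 /\
                    g = (lift1 g1 + lift2 g2)%MM.
Proof.
split.
  elim: k g => [|k IH] g /=.
    by move=> ->; exists 0%N, 0%N, 0%MM, 0%MM; rewrite lift10 lift20 addm0.
  move=> [g' [h [/IH [i [j [g1 [g2 [Hk [H1 [H2 ->]]]]]]] [Hh ->]]]].
  case: Hh => [[h1 [Hh1 ->]]|[h2 [Hh2 ->]]].
    exists i.+1, j, (g1 + h1)%MM, g2; split; first by rewrite addSn Hk.
    split; first by exists g1, h1.
    split => //; rewrite lift1D -!addmA; congr (_ + _)%MM; exact: addmC.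
  exists i, j.+1, g1, (g2 + h2)%MM; split; first by rewrite addnS Hk.
  split => //; split; first by exists g2, h2.
  by rewrite lift2D addmA.
move=> [i [j [g1 [g2 [<- [H1 [H2 ->]]]]]]].
elim: i g1 H1 => [|i IH] g1 /=.
  by move=> ->; rewrite lift10 add0m add0n; apply: Gp_split2.
move=> [g' [h [Hg' [Hh ->]]]]; rewrite ?addSn.
exists (lift1 g' + lift2 g2)%MM, (lift1 h); split; first exact: IH.
split; first by left; exists h.
by rewrite lift1D -!addmA; congr (_ + _)%MM; exact: addmC.
Qed.

Lemma up_split G1 G2 k w : up (Gp (G12 G1 G2) k) w <->
  exists i j, (i + j)%N = k /\ up (Gp G1 i) (pr1 w) /\ up (Gp G2 j) (pr2 w).
Proof.
split.
  move=> [g /Gp_split [i [j [g1 [g2 [Hk [H1 [H2 ->]]]]]]] Hle].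
  exists i, j; split => //; split.
    by exists g1 => //; rewrite -(pr1_lift g1 g2); apply: pr1_le.
  by exists g2 => //; rewrite -(pr2_lift g1 g2); apply: pr2_le.
move=> [i [j [Hk [[g1 H1 L1] [g2 H2 L2]]]]].
exists (lift1 g1 + lift2 g2)%MM.
  by apply/Gp_split; exists i, j, g1, g2.
by rewrite [w]decomp; apply: lift_le.
Qed.

Lemma incl1X g : incl1 n ('X_[g] : {mpoly K[m]}) = 'X_[lift1 g].
Proof.
rewrite /incl1 mmapX /mmap1 [RHS]mpolyXE_id big_split_ord /=.
rewrite [X in _ = _ * X]big1 ?mulr1; last by move=> i _; rewrite lift1r expr0.
by apply: eq_bigr => i _; rewrite lift1l.
Qed.

Lemma incl2X g : incl2 m ('X_[g] : {mpoly K[n]}) = 'X_[lift2 g].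
Proof.
rewrite /incl2 mmapX /mmap1 [RHS]mpolyXE_id big_split_ord /=.
rewrite [X in _ = X * _]big1 ?mul1r; last by move=> i _; rewrite lift2l expr0.
by apply: eq_bigr => i _; rewrite lift2r.
Qed.

Lemma incl1U v : incl1 n ('X_v : {mpoly K[m]}) = 'X_(lshift n v).
Proof. by rewrite /incl1 mmapX mmap1U. Qed.
Lemma incl2U v : incl2 m ('X_v : {mpoly K[n]}) = 'X_(rshift m v).
Proof. by rewrite /incl2 mmapX mmap1U. Qed.

Lemma sum_MI (I1 : {mpoly K[m]} -> Prop) (I2 : {mpoly K[n]} -> Prop) G1 G2 :
  (forall p, I1 p <-> MI (up G1) p) -> (forall p, I2 p <-> MI (up G2) p) ->
  forall p, sum_ideal I1 I2 p <-> MI (up (G12 G1 G2)) p.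
Proof.
move=> HI1 HI2 p; split.
  move: p; apply: gen_min; first exact: up_ideal.
  move=> q [[a [/HI1/MI_gen Ha ->]]|[b [/HI2/MI_gen Hb ->]]].
    move: (gen_hom (@incl1 K m n) Ha); apply: gen_min; first exact: up_ideal.
    move=> q' [x [[g [Hg ->]] ->]]; rewrite [X in MI _ X](_ : _ = 'X_[lift1 g]); last exact: incl1X g.
    apply/MI_X.
    by exists (lift1 g); [left; exists g | apply: lepm_refl].
  move: (gen_hom (@incl2 K m n) Hb); apply: gen_min; first exact: up_ideal.
  move=> q' [x [[g [Hg ->]] ->]].
  rewrite [X in MI _ X](_ : _ = 'X_[lift2 g]); last exact: incl2X g.
  apply/MI_X.
  by exists (lift2 g); [right; exists g | apply: lepm_refl].
move=> /MI_gen; apply: gen_min; first exact: gen_ideal.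
move=> q [w [[[g [Hg ->]]|[g [Hg ->]]] ->]]; apply: gen_in.
  left; exists 'X_[g]; rewrite incl1X; split => //.
  by apply/HI1/MI_X; exists g => //; apply: lepm_refl.
right; exists 'X_[g]; rewrite incl2X; split => //.
by apply/HI2/MI_X; exists g => //; apply: lepm_refl.
Qed.

End Split.
Definition prodQ (R : comRingType) (B C : nat -> R -> Prop) (J : R -> Prop) k x :=
  exists s : seq (nat * R * R),
    (forall t, t \in s -> (t.1.1 <= k)%N /\ B t.1.1 t.1.2 /\ C (k - t.1.1)%N t.2) /\
    ideal_pow J k.+1 (x - \sum_(t <- s) t.1.2 * t.2).

Lemma prodQ_sum (R : comRingType) B C (J : R -> Prop) k (I : eqType) (r : seq I) F :
  (forall i, i \in r -> prodQ B C J k (F i)) -> prodQ B C J k (\sum_(i <- r) F i).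
Proof.
elim: r => [|a r IH] Hr.
  exists [::]; split => //; rewrite !big_nil subr0; apply: ideal0; exact: pow_ideal.
have [s1 [H1 D1]] := Hr a (mem_head _ _).
have [s2 [H2 D2]] : prodQ B C J k (\sum_(i <- r) F i).
  by apply: IH => i Hi; apply: Hr; rewrite inE Hi orbT.
exists (s1 ++ s2); split.
  by move=> t; rewrite mem_cat => /orP [/H1|/H2].
rewrite big_cons big_cat /= opprD addrACA.
apply: ideal_add; [exact: (pow_ideal J k.+1) | exact: D1 | exact: D2].
Qed.

Theorem theorem1p2 (K : fieldType) (m n : nat)
    (I1 : {mpoly K[m]} -> Prop) (I2 : {mpoly K[n]} -> Prop) :
  monomial_ideal I1 -> monomial_ideal I2 ->
  ratliff I1 -> ratliff I2 -> ratliff (sum_ideal I1 I2) ->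
  forall (k : nat) (u : {mpoly K[m + n]}),
    ideal_pow (sum_ideal I1 I2) k u ->
    (soc_lift (sum_ideal I1 I2) (@maxgr K (m + n)) k u <->
     prod_comp
       (ext_comp (@incl1 K m n) (soc_lift I1 (@maxgr K m)) (sum_ideal I1 I2))
       (ext_comp (@incl2 K m n) (soc_lift I2 (@maxgr K n)) (sum_ideal I1 I2))
       (sum_ideal I1 I2) k u).
Proof.
move=> [G1 HG1] [G2 HG2] _ _ _ k u Hu.
have HM1 : forall p, I1 p <-> MI (up G1) p.
  by move=> p; apply: iff_trans (HG1 p) (MI_gen G1 p).
have HM2 : forall p, I2 p <-> MI (up G2) p.
  by move=> p; apply: iff_trans (HG2 p) (MI_gen G2 p).
have HI := sum_MI HM1 HM2.
have HIk := MI_pow HI.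
have HI1k := MI_pow HM1.
have HI2k := MI_pow HM2.
have Hf1 : forall a, I1 a -> sum_ideal I1 I2 (@incl1 K m n a).
  by move=> a Ha; apply: gen_in; left; exists a.
have Hf2 : forall b, I2 b -> sum_ideal I1 I2 (@incl2 K m n b).
  by move=> b Hb; apply: gen_in; right; exists b.
split.
- move=> [_ Hcol]; split => //.
  rewrite (mpolyE u); apply: prodQ_sum => w Hw.
  have Hwk : up (Gp (G12 G1 G2) k) w := (HIk k u).1 Hu w Hw.
  have Hv : forall v, up (Gp (G12 G1 G2) k.+1) (U_(v) + w)%MM.
    move=> v; apply: ((HIk k.+1 _).1 (Hcol _ (gen_in (ex_intro _ v erefl)))).
    by rewrite (perm_mem (msuppMX u U_(v))) map_f.
  case: (classic (up (Gp (G12 G1 G2) k.+1) w)) => Hk1.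
    exists [::]; split => //; rewrite big_nil subr0 -mul_mpolyC.
    by apply: ideal_mull; [exact: pow_ideal | apply/(HIk _ _).2/MI_X].
  move/up_split: Hwk => [i [j [Hij [H1 H2]]]].
  have S1 : soc_lift I1 (@maxgr K m) i 'X_[pr1 w].
    split; first exact/(HI1k _ _).2/MI_X.
    apply: colon_gen; first exact: pow_ideal.
    move=> g [v1 ->]; rewrite -mpolyXD; apply/(HI1k _ _).2/MI_X.
    have := Hv (lshift n v1); move/up_split => [i' [j' [Hij' [H1' H2']]]].
    rewrite pr1Ul in H1'; rewrite pr2Ul in H2'.
    case: (leqP j' j) => Hj.
      rewrite addmC; apply: Gp_anti H1'; lia.
    exfalso; apply: Hk1; apply/up_split; exists i, j.+1.
    split; first by rewrite addnS Hij.
    by split => //; apply: Gp_anti H2'.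
  have S2 : soc_lift I2 (@maxgr K n) j 'X_[pr2 w].
    split; first exact/(HI2k _ _).2/MI_X.
    apply: colon_gen; first exact: pow_ideal.
    move=> g [v2 ->]; rewrite -mpolyXD; apply/(HI2k _ _).2/MI_X.
    have := Hv (rshift m v2); move/up_split => [i' [j' [Hij' [H1' H2']]]].
    rewrite pr1Ur in H1'; rewrite pr2Ur in H2'.
    case: (leqP i' i) => Hi.
      rewrite addmC; apply: Gp_anti H2'; lia.
    exfalso; apply: Hk1; apply/up_split; exists i.+1, j.
    split; first by rewrite addSn Hij.
    by split => //; apply: Gp_anti H1'.
  exists [:: (i, (u@_w)%:MP * @incl1 K m n 'X_[pr1 w], @incl2 K m n 'X_[pr2 w])].
  split.
    move=> t; rewrite inE => /eqP -> /=; split; first by rewrite -Hij leq_addr.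
    split.
      split.
        apply: ideal_mull; first exact: pow_ideal.
        exact: (pow_hom (f := @incl1 K m n) Hf1 (proj1 S1)).
      exists [:: (i, (u@_w)%:MP, 'X_[pr1 w])]; split.
        move=> t0; rewrite inE => /eqP -> /=; split => //; split; [rewrite subnn; exact: pow0 | exact: S1].
      by rewrite big_seq1 /= subrr; apply: ideal0; exact: (pow_ideal _ i.+1).
    rewrite -Hij addKn; split.
      exact: (pow_hom (f := @incl2 K m n) Hf2 (proj1 S2)).
    exists [:: (j, 1, 'X_[pr2 w])]; split.
      move=> t0; rewrite inE => /eqP -> /=; split => //; split; [rewrite subnn; exact: pow0 | exact: S2].
    by rewrite big_seq1 /= mul1r subrr; apply: ideal0; exact: (pow_ideal _ j.+1).
  rewrite big_seq1 /=.
  have -> : (u@_w)%:MP * @incl1 K m n 'X_[pr1 w] * @incl2 K m n 'X_[pr2 w] = u@_w *: 'X_[w].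
    by rewrite incl1X incl2X -mulrA -mpolyXD -decomp mul_mpolyC.
  by rewrite subrr; apply: ideal0; exact: (pow_ideal _ k.+1).
- move=> [_ [s [Hs Hd]]]; split => //.
  apply: colon_gen; first exact: pow_ideal.
  move=> g [v ->].
  have -> : u * 'X_v = (u - \sum_(t <- s) t.1.2 * t.2) * 'X_v
                       + \sum_(t <- s) t.1.2 * t.2 * 'X_v.
    by rewrite -mulr_suml -mulrDl subrK.
  apply: ideal_add; first exact: pow_ideal.
    by apply: ideal_mulr => //; apply: pow_ideal.
  apply: ideal_sum; first exact: pow_ideal.
  move=> t /Hs [Hle [Hx Hy]].
  case: (split_ordP v) => v1 ->.
    rewrite mulrAC -(@incl1U K m n v1).
    have Hx' := extS (f := @incl1 K m n) (z1 := 'X_v1) Hf1 (gen_in (ex_intro _ v1 erefl)) Hx.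
    have -> : k.+1 = (t.1.1.+1 + (k - t.1.1))%N by rewrite addSn subnKC.
    exact: pow_mul Hx' (proj1 Hy).
  rewrite -mulrA -(@incl2U K m n v1).
  have Hy' := extS (f := @incl2 K m n) (z1 := 'X_v1) Hf2 (gen_in (ex_intro _ v1 erefl)) Hy.
  have -> : k.+1 = (t.1.1 + (k - t.1.1).+1)%N by rewrite addnS subnKC.
  exact: pow_mul (proj1 Hx) Hy'.
Qed.
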